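(* Let $f_0$ be a piecewise expanding unimodal map whose critical point $c$ is not periodic. Then: (A) For every $\eta>0$ there exists a neighborhood $W$ of $f_0$ in $\mathcal U^1$ (for the norm $|\cdot|_1$) such that $|J(f,v)-J(f_0,v)|\le\eta|v|_1$ for every $v\in\mathcal B^1(I)$ and every $f\in W$. (B) For every $v_0\in\mathcal B^0(I)$, the function $f\mapsto J(f,v_0)$ on $\mathcal U^1$ is continuous at $f=f_0$ with respect to the norm $|\cdot|_1$.
   Context: Let $I=[-1,1]$ and $c=0$. For $k\ge0$, $\mathcal B^k(I)$ is the Banach space of continuous $f:I\to\mathbb R$ that are $C^k$ on $[-1,0]$ and on $[0,1]$ with $f(1)=f(-1)$, normed by $|f|_k=\max\{|f|_{C^k[-1,0]},|f|_{C^k[0,1]}\}$, $|f|_{C^k(Q)}=\max_{0\le i\le k}\sup_Q|D^if|$. $\mathcal U^1$ is the set of piecewise expanding unimodal maps: $f\in\mathcal B^1(I)$ with $f(-1)=f(1)=-1$, $\inf_{x\in[-1,0]}Df(x)>1$, $\sup_{x\in[0,1]}Df(x)<-1$ and $f(0)\le1$. For bounded $v:I\to\mathbb R$: if $c$ is not periodic for $f$, $J(f,v)=\sum_{i=0}^\infty \frac{v(f^i(c))}{Df^i(f(c))}$; if $c$ has prime period $p$, $J(f,v)=\sum_{i=0}^{p-1}\frac{v(f^i(c))}{Df^i(f(c))}$. *)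

(* Defs.v *)
From Stdlib Require Import Reals Lra ClassicalEpsilon.
From Coquelicot Require Import Coquelicot.
Open Scope R_scope.

(* I = [-1,1], c = 0.  Functions are R -> R; only values on I matter. *)
Definition inI (x : R) : Prop := -1 <= x <= 1.
Definition inP (a b x : R) : Prop := a <= x <= b.

Definition is_pderiv (a b : R) (f g : R -> R) : Prop :=
  forall x, inP a b x ->
    filterlim (fun y => (f y - f x) / (y - x))
      (within (fun y => inP a b y /\ y <> x) (locally x)) (locally (g x)).

Definition cont_on (a b : R) (g : R -> R) : Prop :=
  forall x, inP a b x ->
    filterlim g (within (inP a b) (locally x)) (locally (g x)).

Definition C0_on (a b : R) (f : R -> R) : Prop := cont_on a b f.
Definition C1_on (a b : R) (f : R -> R) : Prop :=
  cont_on a b f /\ exists g, is_pderiv a b f g /\ cont_on a b g.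

(* The derivative on [a,b] as a function (well defined on [a,b] when it
   exists, by uniqueness of limits). *)
Definition pderiv (a b : R) (f : R -> R) (x : R) : R :=
  epsilon (inhabits 0) (fun l =>
    filterlim (fun y => (f y - f x) / (y - x))
      (within (fun y => inP a b y /\ y <> x) (locally x)) (locally l)).

(* Df on I: derivative of the left branch on [-1,0], right branch on (0,1].
   (The value at c = 0 is never used in J.) *)
Definition Df (f : R -> R) (x : R) : R :=
  if Rle_dec x 0 then pderiv (-1) 0 f x else pderiv 0 1 f x.

Definition Bk0 (f : R -> R) : Prop :=
  C0_on (-1) 0 f /\ C0_on 0 1 f /\ f 1 = f (-1).
Definition Bk1 (f : R -> R) : Prop :=
  C1_on (-1) 0 f /\ C1_on 0 1 f /\ f 1 = f (-1).

Definition sup_abs (P : R -> Prop) (h : R -> R) : R :=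
  real (Lub_Rbar (fun r => exists x, P x /\ r = Rabs (h x))).

Definition normC1 (a b : R) (f : R -> R) : R :=
  Rmax (sup_abs (inP a b) f) (sup_abs (inP a b) (pderiv a b f)).
Definition norm1 (f : R -> R) : R :=
  Rmax (normC1 (-1) 0 f) (normC1 0 1 f).

Definition U1 (f : R -> R) : Prop :=
  Bk1 f /\ f (-1) = -1 /\ f 1 = -1 /\
  (exists lam, lam > 1 /\ forall x, inP (-1) 0 x -> pderiv (-1) 0 f x >= lam) /\
  (exists lam, lam < -1 /\ forall x, inP 0 1 x -> pderiv 0 1 f x <= lam) /\
  f 0 <= 1.

Fixpoint iter (f : R -> R) (n : nat) (x : R) : R :=
  match n with O => x | S k => f (iter f k x) end.

Fixpoint Dfn (f : R -> R) (n : nat) (y : R) : R :=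
  match n with O => 1 | S k => Dfn f k y * Df f (iter f k y) end.

Definition prime_period (f : R -> R) (p : nat) : Prop :=
  (1 <= p)%nat /\ iter f p 0 = 0 /\
  forall q, (1 <= q < p)%nat -> iter f q 0 <> 0.

Definition c_periodic (f : R -> R) : Prop := exists p, (1 <= p)%nat /\ iter f p 0 = 0.

Definition Jterm (f v : R -> R) (i : nat) : R :=
  v (iter f i 0) / Dfn f i (f 0).

Definition J (f v : R -> R) : R :=
  if excluded_middle_informative (c_periodic f)
  then let p := epsilon (inhabits 0%nat) (prime_period f) in
       sum_n (Jterm f v) (p - 1)
  else Series (Jterm f v).

(* Main.v *)
Require Import Defs.
From Stdlib Require Import Reals Lra Lia ClassicalEpsilon Classical.
From Coquelicot Require Import Coquelicot.
Open Scope R_scope.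

Lemma ball_R (x d y : R) : ball x d y <-> Rabs (y - x) < d.
Proof. reflexivity. Qed.

Lemma lim_iff {T} (F : (T -> Prop) -> Prop) {FF : Filter F} (h : T -> R) l :
  filterlim h F (locally l) <-> forall eps, eps > 0 -> F (fun t => Rabs (h t - l) < eps).
Proof.
  split.
  - intros H eps He. apply (proj1 (filterlim_locally h l) H (mkposreal eps He)).
  - intros H. apply filterlim_locally. intros [e He]. apply (H e He).
Qed.

Lemma within_iff (P : R -> Prop) x (h : R -> R) l :
  filterlim h (within P (locally x)) (locally l) <->
  forall eps, eps > 0 -> exists d, d > 0 /\ forall y, P y -> Rabs (y - x) < d -> Rabs (h y - l) < eps.
Proof.
  rewrite lim_iff. 2: apply within_filter, locally_filter. split.
  - intros H eps He. destruct (H eps He) as [[d Hd] Hd']. exists d. split. apply Hd.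
    intros y Py Hy. apply Hd'; auto.
  - intros H eps He. destruct (H eps He) as [d [Hd Hd']]. exists (mkposreal d Hd).
    intros y Hy Py. apply Hd'; auto.
Qed.

Lemma within_unique a b x (h : R -> R) l1 l2 : a < b -> inP a b x ->
  filterlim h (within (fun y => inP a b y /\ y <> x) (locally x)) (locally l1) ->
  filterlim h (within (fun y => inP a b y /\ y <> x) (locally x)) (locally l2) -> l1 = l2.
Proof.
  intros Hab Hx H1 H2. rewrite within_iff in H1, H2.
  destruct (Req_dec l1 l2) as [|Hne]; auto. exfalso.
  set (e := Rabs (l1 - l2) / 2).
  assert (He : e > 0) by (unfold e; assert (l1 - l2 <> 0) by lra; assert (0 < Rabs (l1-l2)) by (apply Rabs_pos_lt; auto); lra).
  destruct (H1 e He) as [d1 [Hd1 K1]]. destruct (H2 e He) as [d2 [Hd2 K2]].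
  unfold inP in Hx.
  set (d := Rmin d1 d2).
  assert (Hd : d > 0) by (unfold d; apply Rmin_glb_lt; lra).
  assert (Hdd1 : d <= d1) by apply Rmin_l. assert (Hdd2 : d <= d2) by apply Rmin_r.
  assert (exists y, inP a b y /\ y <> x /\ Rabs (y - x) < d) as [y [Py [Ny Dy]]].
  { destruct (Rlt_dec x b).
    - exists (x + Rmin d (b - x) / 2). assert (Rmin d (b-x) > 0) by (apply Rmin_glb_lt; lra).
      assert (Rmin d (b-x) <= d) by apply Rmin_l. assert (Rmin d (b-x) <= b - x) by apply Rmin_r.
      unfold inP; split; [lra|split; [lra|]]. rewrite Rabs_right; lra.
    - exists (x - Rmin d (x - a) / 2). assert (Rmin d (x-a) > 0) by (apply Rmin_glb_lt; lra).
      assert (Rmin d (x-a) <= d) by apply Rmin_l. assert (Rmin d (x-a) <= x - a) by apply Rmin_r.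
      unfold inP; split; [lra|split; [lra|]]. rewrite Rabs_left; lra. }
  assert (A1 := K1 y (conj Py Ny) ltac:(lra)). assert (A2 := K2 y (conj Py Ny) ltac:(lra)).
  assert (Rabs (l1 - l2) <= Rabs (h y - l2) + Rabs (h y - l1)).
  { replace (l1 - l2) with ((h y - l2) - (h y - l1)) by ring. 
    eapply Rle_trans. apply Rabs_triang. rewrite Rabs_Ropp. lra. }
  unfold e in *. lra.
Qed.

Lemma pderiv_eq a b f g x : a < b -> is_pderiv a b f g -> inP a b x -> pderiv a b f x = g x.
Proof.
  intros Hab Hd Hx. unfold pderiv.
  apply (within_unique a b x (fun y => (f y - f x) / (y - x))); auto.
  apply (epsilon_spec (inhabits 0) (fun l => filterlim (fun y => (f y - f x) / (y - x))
      (within (fun y => inP a b y /\ y <> x) (locally x)) (locally l))).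
  exists (g x). apply Hd; auto.
Qed.

Definition clamp a b x := Rmax a (Rmin b x).

Lemma clamp_id a b x : inP a b x -> clamp a b x = x.
Proof. unfold clamp, inP; intros. rewrite Rmin_right by lra. rewrite Rmax_right; lra. Qed.

Lemma clamp_in a b x : a <= b -> inP a b (clamp a b x).
Proof. unfold clamp, inP; intros. split. apply Rmax_l. apply Rmax_lub. lra. apply Rmin_l. Qed.

Lemma clamp_lip a b x y : a <= b -> Rabs (clamp a b x - clamp a b y) <= Rabs (x - y).
Proof.
  unfold clamp; intros. unfold Rmax, Rmin.
  repeat (destruct Rle_dec); repeat (destruct Rle_dec); unfold Rabs; repeat destruct Rcase_abs; lra.
Qed.

Lemma cont_on_eps a b g x : cont_on a b g -> inP a b x ->
  forall eps, eps > 0 -> exists d, d > 0 /\ forall y, inP a b y -> Rabs (y - x) < d -> Rabs (g y - g x) < eps.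
Proof. intros H Hx. apply within_iff. apply H; auto. Qed.

Lemma clamp_cont a b g x : a <= b -> cont_on a b g -> inP a b x ->
  continuity_pt (fun t => g (clamp a b t)) x.
Proof.
  intros Hab H Hx eps He. destruct (cont_on_eps a b g x H Hx eps He) as [d [Hd K]].
  exists d. split; auto. intros y [_ Hy]. simpl in *. unfold R_dist in *.
  rewrite (clamp_id a b x Hx). apply K. apply clamp_in; auto.
  rewrite <- (clamp_id a b x Hx) at 1. eapply Rle_lt_trans. apply clamp_lip; auto. auto.
Qed.

Lemma cont_bounded a b g : a <= b -> cont_on a b g -> exists M, forall x, inP a b x -> Rabs (g x) <= M.
Proof.
  intros Hab H.
  destruct (continuity_ab_maj (fun t => Rabs (g (clamp a b t))) a b Hab) as [m [Hm _]].
  { intros c Hc. apply (continuity_pt_comp (fun t => g (clamp a b t)) Rabs).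
    apply clamp_cont; auto. apply Rcontinuity_abs. }
  exists (Rabs (g (clamp a b m))). intros x Hx. specialize (Hm x Hx). simpl in Hm.
  rewrite clamp_id in Hm; auto.
Qed.

Lemma mvt a b f g x y : a < b -> cont_on a b f -> is_pderiv a b f g ->
  inP a b x -> inP a b y -> x < y -> exists c, inP a b c /\ f y - f x = g c * (y - x).
Proof.
  intros Hab Hc Hd Hx Hy Hxy.
  destruct (MVT_gen (fun t => f (clamp a b t)) x y g) as [c [Hc1 Hc2]].
  - rewrite Rmin_left, Rmax_right by lra. intros c Hcc.
    apply is_derive_Reals. intros eps He.
    assert (Pc : inP a b c) by (unfold inP in *; lra).
    destruct (proj1 (within_iff _ _ _ _) (Hd c Pc) eps He) as [d [Hd0 K]].
    assert (Hm : Rmin d (Rmin (c - a) (b - c)) > 0).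
    { unfold inP in *. apply Rmin_glb_lt; [lra|]. apply Rmin_glb_lt; lra. }
    exists (mkposreal _ Hm). intros h Hh0 Hh. simpl in Hh.
    assert (Rmin d (Rmin (c - a) (b - c)) <= d) by apply Rmin_l.
    assert (Rmin (c - a) (b - c) <= c - a) by apply Rmin_l.
    assert (Rmin (c - a) (b - c) <= b - c) by apply Rmin_r.
    assert (Rmin d (Rmin (c - a) (b - c)) <= Rmin (c - a) (b - c)) by apply Rmin_r.
    assert (Hh' : - Rmin d (Rmin (c - a) (b - c)) < h < Rmin d (Rmin (c - a) (b - c))).
    { apply Rabs_def2 in Hh. lra. }
    assert (P1 : inP a b (c + h)) by (unfold inP in *; lra).
    rewrite (clamp_id _ _ _ P1), (clamp_id _ _ _ Pc).
    replace h with ((c + h) - c) at 2 by ring.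
    apply K. split; auto. intro E. apply Hh0. lra.
    replace (c + h - c) with h by ring. lra.
  - rewrite Rmin_left, Rmax_right by lra. intros c Hcc. apply clamp_cont; unfold inP in *; auto; lra.
  - rewrite Rmin_left, Rmax_right in Hc1 by lra. exists c. split. unfold inP in *; lra.
    rewrite (clamp_id _ _ _ Hx), (clamp_id _ _ _ Hy) in Hc2. auto.
Qed.

Lemma sup_abs_ge P h M x : (forall y, P y -> Rabs (h y) <= M) -> P x -> Rabs (h x) <= sup_abs P h.
Proof.
  intros HM Hx. unfold sup_abs.
  destruct (Lub_Rbar_correct (fun r => exists x, P x /\ r = Rabs (h x))) as [Hub Hlub].
  assert (H1 : Rbar_le (Rabs (h x)) (Lub_Rbar (fun r => exists x, P x /\ r = Rabs (h x)))).
  { apply Hub. exists x; auto. }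
  assert (H2 : Rbar_le (Lub_Rbar (fun r => exists x, P x /\ r = Rabs (h x))) M).
  { apply Hlub. intros r [y [Py ->]]. simpl. auto. }
  destruct (Lub_Rbar (fun r => exists x, P x /\ r = Rabs (h x))); simpl in *; tauto.
Qed.

Lemma lim_minus (P : R -> Prop) (x : R) (h1 h2 : R -> R) l1 l2 :
  filterlim h1 (within P (locally x)) (locally l1) ->
  filterlim h2 (within P (locally x)) (locally l2) ->
  filterlim (fun y => h1 y - h2 y) (within P (locally x)) (locally (l1 - l2)).
Proof.
  intros H1 H2. rewrite within_iff in *. intros eps He.
  destruct (H1 (eps/2) ltac:(lra)) as [d1 [Hd1 K1]].
  destruct (H2 (eps/2) ltac:(lra)) as [d2 [Hd2 K2]].
  exists (Rmin d1 d2). split. apply Rmin_glb_lt; lra.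
  intros y Py Hy. assert (Rmin d1 d2 <= d1) by apply Rmin_l. assert (Rmin d1 d2 <= d2) by apply Rmin_r.
  specialize (K1 y Py ltac:(lra)). specialize (K2 y Py ltac:(lra)).
  replace (h1 y - h2 y - (l1 - l2)) with ((h1 y - l1) - (h2 y - l2)) by ring.
  eapply Rle_lt_trans. apply Rabs_triang. rewrite Rabs_Ropp. lra.
Qed.

Lemma lim_ext (P : R -> Prop) (x : R) (h1 h2 : R -> R) l : (forall y, P y -> h1 y = h2 y) ->
  filterlim h1 (within P (locally x)) (locally l) ->
  filterlim h2 (within P (locally x)) (locally l).
Proof.
  intros E H. rewrite within_iff in *. intros eps He. destruct (H eps He) as [d [Hd K]].
  exists d; split; auto. intros y Py Hy. rewrite <- E; auto.
Qed.

Lemma C1_minus a b f f0 : C1_on a b f -> C1_on a b f0 ->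
  cont_on a b (fun x => f x - f0 x) /\
  exists g, is_pderiv a b (fun x => f x - f0 x) g /\ cont_on a b g /\
   (forall x, a < b -> inP a b x -> g x = pderiv a b f x - pderiv a b f0 x).
Proof.
  intros [C1 [g1 [D1 G1]]] [C2 [g2 [D2 G2]]]. split; unfold cont_on, is_pderiv in *.
  - intros x Hx. apply lim_minus; auto.
  - exists (fun x => g1 x - g2 x). split; [|split].
    + intros x Hx. eapply lim_ext; [|apply lim_minus; [apply D1|apply D2]; auto].
      intros y [_ Hy]. simpl. field. lra.
    + intros x Hx. apply lim_minus; auto.
    + intros x Hab Hx. rewrite (pderiv_eq a b f g1), (pderiv_eq a b f0 g2); auto.
Qed.

Lemma piece_facts a b f : a < b -> C1_on a b f ->
  (forall x, inP a b x -> Rabs (f x) <= normC1 a b f) /\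
  (forall x, inP a b x -> Rabs (pderiv a b f x) <= normC1 a b f) /\
  (forall x y, inP a b x -> inP a b y -> Rabs (f x - f y) <= normC1 a b f * Rabs (x - y)).
Proof.
  intros Hab [C [g [D G]]].
  destruct (cont_bounded a b f ltac:(lra) C) as [M1 HM1].
  destruct (cont_bounded a b g ltac:(lra) G) as [M2 HM2].
  assert (B2 : forall x, inP a b x -> Rabs (pderiv a b f x) <= normC1 a b f).
  { intros x Hx. eapply Rle_trans; [|apply Rmax_r]. apply (sup_abs_ge _ _ M2); auto.
    intros y Hy. rewrite (pderiv_eq a b f g); auto. }
  split; [|split]; auto.
  - intros x Hx. eapply Rle_trans; [|apply Rmax_l]. apply (sup_abs_ge _ _ M1); auto.
  - assert (K : forall x y, inP a b x -> inP a b y -> x < y ->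
       Rabs (f x - f y) <= normC1 a b f * Rabs (x - y)).
    { intros x y Hx Hy Hxy. destruct (mvt a b f g x y) as [c [Pc E]]; auto.
      replace (f x - f y) with (- (f y - f x)) by ring. rewrite Rabs_Ropp, E, Rabs_mult.
      rewrite (Rabs_left (x - y)) by lra. replace (- (x - y)) with (y - x) by ring.
      rewrite (Rabs_right (y - x)) by lra. apply Rmult_le_compat_r. lra.
      rewrite <- (pderiv_eq a b f g c); auto. }
    intros x y Hx Hy. destruct (Rtotal_order x y) as [H|[H|H]].
    + auto.
    + subst. replace (y - y) with 0 by ring. rewrite Rabs_R0, Rmult_0_r. replace (f y - f y) with 0 by ring. right; apply Rabs_R0.
    + rewrite Rabs_minus_sym, (Rabs_minus_sym x). auto.
Qed.

Definition relI_cont (h : R -> R) (b : R) := forall eps, eps > 0 ->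
  exists d, d > 0 /\ forall y, inI y -> Rabs (y - b) < d -> Rabs (h y - h b) < eps.

Lemma relI_nz h h1 h2 b : (forall y, inP (-1) 0 y -> h y = h1 y) -> (forall y, 0 < y <= 1 -> h y = h2 y) ->
  cont_on (-1) 0 h1 -> cont_on 0 1 h2 -> inI b -> b <> 0 -> relI_cont h b.
Proof.
  intros E1 E2 C1 C2 Hb Hb0 eps He. unfold inI, inP in *.
  destruct (Rlt_dec b 0).
  - destruct (cont_on_eps _ _ _ b C1 ltac:(unfold inP; lra) eps He) as [d [Hd K]].
    exists (Rmin d (-b)). split. apply Rmin_glb_lt; lra.
    intros y Hy Hyb. assert (Rmin d (-b) <= d) by apply Rmin_l. assert (Rmin d (-b) <= -b) by apply Rmin_r.
    apply Rabs_def2 in Hyb.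
    rewrite !E1 by (unfold inP; lra). apply K. unfold inP; lra. apply Rabs_def1; lra.
  - destruct (cont_on_eps _ _ _ b C2 ltac:(unfold inP; lra) eps He) as [d [Hd K]].
    exists (Rmin d b). split. apply Rmin_glb_lt; lra.
    intros y Hy Hyb. assert (Rmin d b <= d) by apply Rmin_l. assert (Rmin d b <= b) by apply Rmin_r.
    apply Rabs_def2 in Hyb.
    rewrite !E2 by lra. apply K. unfold inP; lra. apply Rabs_def1; lra.
Qed.

Lemma relI_full h b : cont_on (-1) 0 h -> cont_on 0 1 h -> inI b -> relI_cont h b.
Proof.
  intros C1 C2 Hb. destruct (Req_dec b 0) as [->|Hb0].
  - intros eps He.
    destruct (cont_on_eps _ _ _ 0 C1 ltac:(unfold inP; lra) eps He) as [d1 [Hd1 K1]].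
    destruct (cont_on_eps _ _ _ 0 C2 ltac:(unfold inP; lra) eps He) as [d2 [Hd2 K2]].
    exists (Rmin d1 d2). split. apply Rmin_glb_lt; lra.
    intros y Hy Hyb. assert (Rmin d1 d2 <= d1) by apply Rmin_l. assert (Rmin d1 d2 <= d2) by apply Rmin_r.
    unfold inI in Hy. destruct (Rle_dec y 0).
    + apply K1; unfold inP; lra.
    + apply K2; unfold inP; lra.
  - apply (relI_nz h h h); auto.
Qed.

Lemma Df_left f x : inP (-1) 0 x -> Df f x = pderiv (-1) 0 f x.
Proof. intros [H1 H2]. unfold Df. destruct (Rle_dec x 0); [auto| lra]. Qed.

Lemma Df_right f x : 0 < x -> Df f x = pderiv 0 1 f x.
Proof. intros H. unfold Df. destruct (Rle_dec x 0); [lra| auto]. Qed.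

Lemma U1_f_cont f b : U1 f -> inI b -> relI_cont f b.
Proof.
  intros [[[C1 _] [[C2 _] _]] _] Hb. apply relI_full; auto.
Qed.

Lemma U1_Df_cont f b : U1 f -> inI b -> b <> 0 -> relI_cont (Df f) b.
Proof.
  intros [[[_ [g1 [D1 G1]]] [[_ [g2 [D2 G2]]] _]] _] Hb Hb0.
  apply (relI_nz _ g1 g2); auto.
  - intros y Hy. rewrite Df_left by auto. apply pderiv_eq; auto; lra.
  - intros y Hy. rewrite Df_right by lra. apply pderiv_eq; auto; [lra| unfold inP; lra].
Qed.

Lemma maps_I f x : U1 f -> inI x -> inI (f x).
Proof.
  intros [[[C1 [g1 [D1 G1]]] [[C2 [g2 [D2 G2]]] _]] [Hm1 [Hp1 [[l1 [Hl1 L1]] [[l2 [Hl2 L2]] H0]]]]] Hx.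
  unfold inI in *.
  destruct (Rle_dec x 0).
  - split.
    + destruct (Req_dec x (-1)) as [->|Hne]; [lra|].
      destruct (mvt (-1) 0 f g1 (-1) x) as [c [Pc E]]; try (unfold inP; lra); auto.
      rewrite <- (pderiv_eq (-1) 0 f g1 c) in E by (auto; lra). specialize (L1 c Pc).
      assert (0 <= pderiv (-1) 0 f c * (x - -1)) by (apply Rmult_le_pos; lra). lra.
    + destruct (Req_dec x 0) as [->|Hne]; [lra|].
      destruct (mvt (-1) 0 f g1 x 0) as [c [Pc E]]; try (unfold inP; lra); auto.
      rewrite <- (pderiv_eq (-1) 0 f g1 c) in E by (auto; lra). specialize (L1 c Pc).
      assert (0 <= pderiv (-1) 0 f c * (0 - x)) by (apply Rmult_le_pos; lra). lra.
  - split.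
    + destruct (Req_dec x 1) as [->|Hne]; [lra|].
      destruct (mvt 0 1 f g2 x 1) as [c [Pc E]]; try (unfold inP; lra); auto.
      rewrite <- (pderiv_eq 0 1 f g2 c) in E by (auto; lra). specialize (L2 c Pc).
      assert (0 <= - pderiv 0 1 f c * (1 - x)) by (apply Rmult_le_pos; lra). lra.
    + destruct (mvt 0 1 f g2 0 x) as [c [Pc E]]; try (unfold inP; lra); auto.
      rewrite <- (pderiv_eq 0 1 f g2 c) in E by (auto; lra). specialize (L2 c Pc).
      assert (0 <= - pderiv 0 1 f c * (x - 0)) by (apply Rmult_le_pos; lra). lra.
Qed.

Lemma close_lem f f0 d : U1 f -> U1 f0 -> norm1 (fun x => f x - f0 x) < d ->
  forall x, inI x -> Rabs (f x - f0 x) < d /\ Rabs (Df f x - Df f0 x) < d.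
Proof.
  intros [[Cl [Cr _]] _] [[Cl0 [Cr0 _]] _] Hn x Hx.
  destruct (C1_minus _ _ _ _ Cl Cl0) as [CL [gL [DL [GL EL]]]].
  destruct (C1_minus _ _ _ _ Cr Cr0) as [CR [gR [DR [GR ER]]]].
  destruct (piece_facts (-1) 0 (fun x => f x - f0 x) ltac:(lra) (conj CL (ex_intro _ gL (conj DL GL))))
    as [A1 [A2 _]].
  destruct (piece_facts 0 1 (fun x => f x - f0 x) ltac:(lra) (conj CR (ex_intro _ gR (conj DR GR))))
    as [B1 [B2 _]].
  assert (N1 : normC1 (-1) 0 (fun x => f x - f0 x) < d) by (eapply Rle_lt_trans; [apply Rmax_l|eauto]).
  assert (N2 : normC1 0 1 (fun x => f x - f0 x) < d) by (eapply Rle_lt_trans; [apply Rmax_r|eauto]).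
  unfold inI in Hx. destruct (Rle_dec x 0).
  - assert (P : inP (-1) 0 x) by (unfold inP; lra).
    split. eapply Rle_lt_trans; [apply A1|]; auto.
    rewrite !Df_left by auto. rewrite <- EL by (auto; lra).
    rewrite <- (pderiv_eq (-1) 0 (fun x => f x - f0 x) gL) by (auto; lra). eapply Rle_lt_trans; [apply A2|]; auto.
  - assert (P : inP 0 1 x) by (unfold inP; lra).
    split. eapply Rle_lt_trans; [apply B1|]; auto.
    rewrite !Df_right by lra. rewrite <- ER by (auto; lra).
    rewrite <- (pderiv_eq 0 1 (fun x => f x - f0 x) gR) by (auto; lra). eapply Rle_lt_trans; [apply B2|]; auto.
Qed.

Lemma expand0 f0 : U1 f0 -> exists l, l > 1 /\ forall x, inI x -> Rabs (Df f0 x) >= l.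
Proof.
  intros [_ [_ [_ [[l1 [Hl1 L1]] [[l2 [Hl2 L2]] _]]]]].
  exists (Rmin l1 (-l2)). split. apply Rmin_glb_lt; lra.
  assert (Rmin l1 (-l2) <= l1) by apply Rmin_l. assert (Rmin l1 (-l2) <= -l2) by apply Rmin_r.
  intros x Hx. unfold inI in Hx. destruct (Rle_dec x 0).
  - rewrite Df_left by (unfold inP; lra). specialize (L1 x ltac:(unfold inP; lra)).
    rewrite Rabs_right; lra.
  - rewrite Df_right by lra. specialize (L2 x ltac:(unfold inP; lra)).
    rewrite Rabs_left; lra.
Qed.

Lemma prod_close X X0 Y Y0 e : e > 0 -> Rabs (X - X0) < e / (2 * (Rabs Y0 + 1)) ->
  Rabs (Y - Y0) < Rmin 1 (e / (2 * (Rabs X0 + 1))) -> Rabs (X * Y - X0 * Y0) < e.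
Proof.
  intros He H1 H2.
  assert (A0 : 0 <= Rabs Y0) by apply Rabs_pos. assert (B0 : 0 <= Rabs X0) by apply Rabs_pos.
  assert (H2a : Rabs (Y - Y0) < 1) by (eapply Rlt_le_trans; [apply H2| apply Rmin_l]).
  assert (H2b : Rabs (Y - Y0) < e / (2 * (Rabs X0 + 1))) by (eapply Rlt_le_trans; [apply H2| apply Rmin_r]).
  assert (HY : Rabs Y <= Rabs Y0 + 1).
  { replace Y with ((Y - Y0) + Y0) by ring. eapply Rle_trans. apply Rabs_triang. lra. }
  replace (X * Y - X0 * Y0) with ((X - X0) * Y + X0 * (Y - Y0)) by ring.
  eapply Rle_lt_trans. apply Rabs_triang. rewrite !Rabs_mult.
  assert (T1 : Rabs (X - X0) * Rabs Y <= e / 2).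
  { apply Rle_trans with (e / (2 * (Rabs Y0 + 1)) * (Rabs Y0 + 1)).
    apply Rmult_le_compat; try apply Rabs_pos; lra. right. field. lra. }
  assert (T2 : Rabs X0 * Rabs (Y - Y0) < e / 2).
  { apply Rle_lt_trans with ((Rabs X0 + 1) * (e / (2 * (Rabs X0 + 1))) - e / (2 * (Rabs X0 + 1))).
    - assert (0 < e / (2 * (Rabs X0 + 1))) by (apply Rdiv_lt_0_compat; lra).
      assert (Rabs X0 * Rabs (Y - Y0) <= Rabs X0 * (e / (2 * (Rabs X0 + 1)))).
      { apply Rmult_le_compat_l; lra. }
      lra.
    - assert (0 < e / (2 * (Rabs X0 + 1))) by (apply Rdiv_lt_0_compat; lra).
      replace ((Rabs X0 + 1) * (e / (2 * (Rabs X0 + 1)))) with (e/2) by (field; lra). lra. }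
  lra.
Qed.

Definition Fc (f0 : R -> R) (S : (R -> R) -> Prop) : Prop :=
  exists d, d > 0 /\ forall f, U1 f -> norm1 (fun x => f x - f0 x) < d -> S f.

Lemma Fc_and f0 P Q : Fc f0 P -> Fc f0 Q -> Fc f0 (fun f => P f /\ Q f).
Proof.
  intros [d1 [H1 K1]] [d2 [H2 K2]]. exists (Rmin d1 d2). split. apply Rmin_glb_lt; lra.
  intros f Uf Hn. assert (Rmin d1 d2 <= d1) by apply Rmin_l. assert (Rmin d1 d2 <= d2) by apply Rmin_r.
  split; [apply K1|apply K2]; auto; lra.
Qed.

Lemma Fc_imp f0 (P Q : (R -> R) -> Prop) : (forall f, P f -> Q f) -> Fc f0 P -> Fc f0 Q.
Proof. intros H [d [Hd K]]. exists d; split; auto. Qed.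

Lemma Fc_U1 f0 : Fc f0 U1.
Proof. exists 1. split. lra. auto. Qed.

Lemma Fc_close f0 d : U1 f0 -> d > 0 ->
  Fc f0 (fun f => forall x, inI x -> Rabs (f x - f0 x) < d /\ Rabs (Df f x - Df f0 x) < d).
Proof. intros U Hd. exists d. split; auto. intros f Uf Hn. apply close_lem; auto. Qed.

Lemma iter_I f n x : U1 f -> inI x -> inI (iter f n x).
Proof. intros U Hx. induction n; simpl; auto. apply maps_I; auto. Qed.

Lemma iter_S f n x : iter f n (f x) = iter f (S n) x.
Proof. induction n; simpl; auto. rewrite IHn. reflexivity. Qed.

Lemma tend_iter f0 : U1 f0 -> forall i eps, eps > 0 ->
  Fc f0 (fun f => Rabs (iter f i 0 - iter f0 i 0) < eps).
Proof.
  intros U i. induction i; intros eps He.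
  - apply (Fc_imp f0 (fun _ => True)). intros f _. simpl. rewrite Rminus_0_r, Rabs_R0. auto.
    exists 1. split; auto; lra.
  - assert (Hb : inI (iter f0 i 0)) by (apply iter_I; auto; unfold inI; lra).
    destruct (U1_f_cont f0 _ U Hb (eps/2) ltac:(lra)) as [d [Hd K]].
    generalize (Fc_and _ _ _ (Fc_and _ _ _ (IHi d Hd) (Fc_close f0 (eps/2) U ltac:(lra))) (Fc_U1 f0)).
    apply Fc_imp. intros f [[A B] Uf]. simpl.
    assert (Ha : inI (iter f i 0)) by (apply iter_I; auto; unfold inI; lra).
    destruct (B _ Ha) as [B1 _]. specialize (K _ Ha A).
    replace (f (iter f i 0) - f0 (iter f0 i 0)) with
      ((f (iter f i 0) - f0 (iter f i 0)) + (f0 (iter f i 0) - f0 (iter f0 i 0))) by ring.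
    eapply Rle_lt_trans. apply Rabs_triang. lra.
Qed.

Lemma nonper f0 i : ~ c_periodic f0 -> (1 <= i)%nat -> iter f0 i 0 <> 0.
Proof. intros NP Hi E. apply NP. exists i. auto. Qed.

Lemma tend_Df f0 : U1 f0 -> ~ c_periodic f0 -> forall i eps, eps > 0 ->
  Fc f0 (fun f => Rabs (Df f (iter f (S i) 0) - Df f0 (iter f0 (S i) 0)) < eps).
Proof.
  intros U NP i eps He.
  assert (Hb : inI (iter f0 (S i) 0)) by (apply iter_I; auto; unfold inI; lra).
  destruct (U1_Df_cont f0 _ U Hb (nonper f0 (S i) NP ltac:(lia)) (eps/2) ltac:(lra)) as [d [Hd K]].
  generalize (Fc_and _ _ _ (Fc_and _ _ _ (tend_iter f0 U (S i) d Hd) (Fc_close f0 (eps/2) U ltac:(lra))) (Fc_U1 f0)).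
  apply Fc_imp. intros f [[A B] Uf].
  assert (Ha : inI (iter f (S i) 0)) by (apply iter_I; auto; unfold inI; lra).
  destruct (B _ Ha) as [_ B1]. specialize (K _ Ha A).
  replace (Df f (iter f (S i) 0) - Df f0 (iter f0 (S i) 0)) with
    ((Df f (iter f (S i) 0) - Df f0 (iter f (S i) 0)) + (Df f0 (iter f (S i) 0) - Df f0 (iter f0 (S i) 0))) by ring.
  eapply Rle_lt_trans. apply Rabs_triang. lra.
Qed.

Lemma tend_D f0 : U1 f0 -> ~ c_periodic f0 -> forall i eps, eps > 0 ->
  Fc f0 (fun f => Rabs (Dfn f i (f 0) - Dfn f0 i (f0 0)) < eps).
Proof.
  intros U NP i. induction i; intros eps He.
  - exists 1. split. lra. intros f _ _. simpl. rewrite Rminus_eq_0, Rabs_R0. auto.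
  - set (X0 := Dfn f0 i (f0 0)). set (Y0 := Df f0 (iter f0 (S i) 0)).
    assert (P1 : eps / (2 * (Rabs Y0 + 1)) > 0).
    { apply Rdiv_lt_0_compat; auto. assert (0 <= Rabs Y0) by apply Rabs_pos. lra. }
    assert (P2 : Rmin 1 (eps / (2 * (Rabs X0 + 1))) > 0).
    { apply Rmin_glb_lt. lra. apply Rdiv_lt_0_compat; auto. assert (0 <= Rabs X0) by apply Rabs_pos. lra. }
    generalize (Fc_and _ _ _ (IHi _ P1) (tend_Df f0 U NP i _ P2)).
    apply Fc_imp. intros f [A B]. simpl. rewrite !iter_S.
    apply prod_close; auto.
Qed.

Lemma prime_exists f : c_periodic f -> exists p, prime_period f p.
Proof.
  intros [n [Hn E]]. revert Hn E. induction n as [n IH] using (well_founded_induction Wf_nat.lt_wf).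
  intros Hn E. destruct (classic (exists q, (1 <= q < n)%nat /\ iter f q 0 = 0)) as [[q [Hq Eq]]|Hno].
  - apply (IH q); [lia| lia| auto].
  - exists n. split; auto. split; auto. intros q Hq Eq. apply Hno. exists q; auto.
Qed.

Lemma geo_ser mu C : 0 <= mu < 1 -> ex_series (fun n => C * mu ^ n).
Proof.
  intros H. apply (ex_series_scal_l C (fun n => mu ^ n)). apply ex_series_geom. rewrite Rabs_right; lra.
Qed.

Lemma partial_bound (a : nat -> R) C mu N : 0 <= mu < 1 -> (1 <= N)%nat -> 0 <= C ->
  (forall i, Rabs (a i) <= C * mu ^ i) ->
  forall k, Rabs (sum_n a (N - 1 + k) - sum_n a (N - 1)) <= C * (mu ^ N - mu ^ (N + k)) / (1 - mu).
Proof.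
  intros Hm HN HC Ha k. induction k.
  - rewrite Nat.add_0_r, Nat.add_0_r, Rminus_eq_0, Rminus_eq_0, Rabs_R0. unfold Rdiv. rewrite Rmult_0_r, Rmult_0_l. lra.
  - replace (N - 1 + S k)%nat with (S (N - 1 + k))%nat by lia. rewrite sum_Sn.
    change (plus (sum_n a (N - 1 + k)) (a (S (N - 1 + k)))) with (sum_n a (N - 1 + k) + a (S (N - 1 + k))).
    replace (S (N - 1 + k))%nat with (N + k)%nat by lia.
    replace (sum_n a (N - 1 + k)%nat + a (N + k)%nat - sum_n a (N - 1)%nat) with
      ((sum_n a (N - 1 + k)%nat - sum_n a (N - 1)%nat) + a (N + k)%nat) by ring.
    eapply Rle_trans. apply Rabs_triang.
    apply Rle_trans with (C * (mu ^ N - mu ^ (N + k)) / (1 - mu) + C * mu ^ (N + k)).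
    apply Rplus_le_compat; auto.
    right. replace (N + S k)%nat with (S (N + k))%nat by lia. simpl. field. lra.
Qed.

Lemma J_approx f v C mu N : 0 <= mu < 1 -> (1 <= N)%nat -> 0 <= C ->
  (forall i, Rabs (Jterm f v i) <= C * mu ^ i) ->
  (forall q, (1 <= q < N)%nat -> iter f q 0 <> 0) ->
  Rabs (J f v - sum_n (Jterm f v) (N - 1)) <= C * mu ^ N / (1 - mu).
Proof.
  intros Hm HN HC Ha Hq. assert (P0 : 0 <= mu ^ N) by (apply pow_le; lra).
  unfold J. destruct (excluded_middle_informative (c_periodic f)) as [Hp|Hp].
  - simpl. set (p := epsilon (inhabits 0%nat) (prime_period f)).
    assert (Pp : prime_period f p) by (apply epsilon_spec; apply prime_exists; auto).
    destruct Pp as [Hp1 [Hp2 _]].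
    assert (HpN : (N <= p)%nat) by (destruct (Compare_dec.le_lt_dec N p); auto; exfalso; apply (Hq p); auto; lia).
    replace (p - 1)%nat with (N - 1 + (p - N))%nat by lia.
    eapply Rle_trans. apply (partial_bound _ C mu); auto.
    apply Rmult_le_compat_r. apply Rlt_le, Rinv_0_lt_compat; lra.
    assert (0 <= mu ^ (N + (p - N))) by (apply pow_le; lra). nra.
  - assert (Ex : ex_series (Jterm f v)).
    { apply (@ex_series_le R_AbsRing R_CompleteNormedModule _ (fun n => C * mu ^ n)); auto. apply geo_ser; auto. }
    rewrite (Series_incr_n _ N) by (auto; lia). rewrite <- sum_n_Reals.
    replace (Init.Nat.pred N) with (N - 1)%nat by lia.
    replace (sum_n (Jterm f v) (N - 1) + Series (fun k => Jterm f v (N + k)) - sum_n (Jterm f v) (N - 1))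
      with (Series (fun k => Jterm f v (N + k))) by ring.
    assert (Bk : forall k, Rabs (Jterm f v (N + k)) <= (C * mu ^ N) * mu ^ k).
    { intros k. rewrite Rmult_assoc, <- pow_add. auto. }
    assert (Ek : ex_series (fun k => Rabs (Jterm f v (N + k)))).
    { apply (@ex_series_le R_AbsRing R_CompleteNormedModule _ (fun k => (C * mu ^ N) * mu ^ k)). intros k. change (norm (Rabs (Jterm f v (N + k)))) with (Rabs (Rabs (Jterm f v (N + k)))).
      rewrite Rabs_Rabsolu. auto. apply geo_ser; auto. }
    eapply Rle_trans. apply Series_Rabs; auto.
    eapply Rle_trans. apply (Series_le _ (fun k => (C * mu ^ N) * mu ^ k)).
    intros k; split; [apply Rabs_pos| auto]. apply geo_ser; auto.
    rewrite Series_scal_l, Series_geom by (rewrite Rabs_right; lra). right. field. lra.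
Qed.

Lemma Dfn_lower f l : U1 f -> l >= 1 -> (forall x, inI x -> Rabs (Df f x) >= l) ->
  forall i y, inI y -> Rabs (Dfn f i y) >= l ^ i.
Proof.
  intros U Hl H i y Hy. induction i; simpl.
  - rewrite Rabs_R1. lra.
  - rewrite Rabs_mult. assert (0 <= l ^ i) by (apply pow_le; lra).
    specialize (H _ (iter_I f i y U Hy)).
    assert (l ^ i * l <= Rabs (Dfn f i y) * Rabs (Df f (iter f i y))).
    { apply Rmult_le_compat; lra. }
    lra.
Qed.

Lemma jterm_bound f l : U1 f -> l > 1 -> (forall x, inI x -> Rabs (Df f x) >= l) ->
  forall v C i, (forall x, inI x -> Rabs (v x) <= C) ->
  Rabs (Jterm f v i) <= C * (/ l) ^ i /\ Rabs (Dfn f i (f 0)) >= 1.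
Proof.
  intros U Hl H v C i Hv.
  assert (I0 : inI (f 0)) by (apply maps_I; auto; unfold inI; lra).
  assert (D := Dfn_lower f l U ltac:(lra) H i (f 0) I0).
  assert (P1 : 1 <= l ^ i) by (apply pow_R1_Rle; lra).
  split; [|lra].
  unfold Jterm. unfold Rdiv. rewrite Rabs_mult, Rabs_inv, pow_inv.
  apply Rmult_le_compat. apply Rabs_pos. apply Rlt_le, Rinv_0_lt_compat. lra.
  apply Hv. apply iter_I; auto. unfold inI; lra.
  apply Rinv_le_contravar; lra.
Qed.

Lemma Fc_forall f0 (P : nat -> (R -> R) -> Prop) N :
  (forall i, Fc f0 (P i)) -> Fc f0 (fun f => forall i, (i < N)%nat -> P i f).
Proof.
  intros H. induction N.
  - exists 1. split. lra. intros. lia.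
  - generalize (Fc_and _ _ _ IHN (H N)). apply Fc_imp. intros f [A B] i Hi.
    destruct (Nat.eq_dec i N). subst; auto. apply A; lia.
Qed.

Lemma Fc_sign f0 : U1 f0 -> ~ c_periodic f0 -> forall i,
  Fc f0 (fun f => iter f i 0 = iter f0 i 0 \/ Rabs (iter f i 0 - iter f0 i 0) < Rabs (iter f0 i 0)).
Proof.
  intros U NP i. destruct i.
  - exists 1. split. lra. intros. left. reflexivity.
  - assert (0 < Rabs (iter f0 (S i) 0)) by (apply Rabs_pos_lt, nonper; auto; lia).
    generalize (tend_iter f0 U (S i) _ H). apply Fc_imp. intros; right; auto.
Qed.

Lemma Fc_comp f0 h i : U1 f0 -> relI_cont h (iter f0 i 0) -> forall e, e > 0 ->
  Fc f0 (fun f => Rabs (h (iter f i 0) - h (iter f0 i 0)) < e).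
Proof.
  intros U Hc e He. destruct (Hc e He) as [d [Hd K]].
  generalize (Fc_and _ _ _ (tend_iter f0 U i d Hd) (Fc_U1 f0)). apply Fc_imp.
  intros f [A Uf]. apply K; auto. apply iter_I; auto. unfold inI; lra.
Qed.

Lemma frac_diff x y A B : Rabs A >= 1 -> Rabs B >= 1 ->
  Rabs (x / A - y / B) <= Rabs (x - y) + Rabs y * Rabs (A - B).
Proof.
  intros HA HB.
  assert (A0 : A <> 0) by (intro E; rewrite E, Rabs_R0 in HA; lra).
  assert (B0 : B <> 0) by (intro E; rewrite E, Rabs_R0 in HB; lra).
  replace (x / A - y / B) with ((x - y) * / A + y * (B - A) * (/ A * / B)) by (field; auto). rewrite (Rabs_minus_sym A B).
  eapply Rle_trans. apply Rabs_triang. rewrite !Rabs_mult, !Rabs_inv.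
  assert (IA : / Rabs A <= 1) by (rewrite <- Rinv_1; apply Rinv_le_contravar; lra).
  assert (IB : / Rabs B <= 1) by (rewrite <- Rinv_1; apply Rinv_le_contravar; lra).
  assert (0 <= / Rabs A) by (apply Rlt_le, Rinv_0_lt_compat; lra).
  assert (0 <= / Rabs B) by (apply Rlt_le, Rinv_0_lt_compat; lra).
  assert (0 <= Rabs (x - y)) by apply Rabs_pos.
  assert (0 <= Rabs y * Rabs (B - A)) by (apply Rmult_le_pos; apply Rabs_pos).
  assert (/ Rabs A * / Rabs B <= 1) by (replace 1 with (1 * 1) by ring; apply Rmult_le_compat; lra).
  apply Rplus_le_compat.
  - replace (Rabs (x - y)) with (Rabs (x - y) * 1) at 2 by ring. apply Rmult_le_compat_l; lra.
  - replace (Rabs y * Rabs (B - A)) with (Rabs y * Rabs (B - A) * 1) at 2 by ring.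
    apply Rmult_le_compat_l; lra.
Qed.

Lemma sum_diff_bound (a b : nat -> R) n B : (forall i, (i <= n)%nat -> Rabs (a i - b i) <= B) ->
  Rabs (sum_n a n - sum_n b n) <= (INR n + 1) * B.
Proof.
  intros H. induction n.
  - rewrite !sum_O. simpl. specialize (H 0%nat ltac:(lia)). lra.
  - rewrite !sum_Sn. change (Rabs ((sum_n a n + a (S n)) - (sum_n b n + b (S n))) <= (INR (S n) + 1) * B).
    replace ((sum_n a n + a (S n)) - (sum_n b n + b (S n))) with
      ((sum_n a n - sum_n b n) + (a (S n) - b (S n))) by ring.
    eapply Rle_trans. apply Rabs_triang. rewrite S_INR.
    specialize (IHn (fun i Hi => H i ltac:(lia))). specialize (H (S n) ltac:(lia)). lra.
Qed.

Lemma v_bounds v : Bk1 v ->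
  (forall x, inI x -> Rabs (v x) <= norm1 v) /\
  (forall a b, inI a -> inI b -> (a = b \/ Rabs (a - b) < Rabs b) ->
     Rabs (v a - v b) <= norm1 v * Rabs (a - b)).
Proof.
  intros [CL [CR _]].
  destruct (piece_facts (-1) 0 v ltac:(lra) CL) as [A1 [_ A3]].
  destruct (piece_facts 0 1 v ltac:(lra) CR) as [B1 [_ B3]].
  assert (N1 : normC1 (-1) 0 v <= norm1 v) by apply Rmax_l.
  assert (N2 : normC1 0 1 v <= norm1 v) by apply Rmax_r.
  split.
  - intros x Hx. unfold inI in Hx. destruct (Rle_dec x 0).
    + eapply Rle_trans; [apply A1|]; auto. unfold inP; lra.
    + eapply Rle_trans; [apply B1|]; auto. unfold inP; lra.
  - intros a b Ha Hb Hab. unfold inI in *.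
    assert (Hs : (inP (-1) 0 a /\ inP (-1) 0 b) \/ (inP 0 1 a /\ inP 0 1 b)).
    { destruct Hab as [->|Hab].
      - destruct (Rle_dec b 0); [left|right]; unfold inP; lra.
      - apply Rabs_def2 in Hab. unfold Rabs in Hab. destruct (Rcase_abs b); [left|right]; unfold inP; lra. }
    assert (0 <= Rabs (a - b)) by apply Rabs_pos.
    destruct Hs as [[P Q]|[P Q]].
    + eapply Rle_trans; [apply A3; auto|]. apply Rmult_le_compat_r; lra.
    + eapply Rle_trans; [apply B3; auto|]. apply Rmult_le_compat_r; lra.
Qed.

Lemma setup f0 : U1 f0 -> exists mu, 0 < mu < 1 /\
  Fc f0 (fun f => forall v C, (forall x, inI x -> Rabs (v x) <= C) -> forall i,
     Rabs (Jterm f v i) <= C * mu ^ i /\ Rabs (Dfn f i (f 0)) >= 1) /\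
  (forall v C, (forall x, inI x -> Rabs (v x) <= C) -> forall i,
     Rabs (Jterm f0 v i) <= C * mu ^ i /\ Rabs (Dfn f0 i (f0 0)) >= 1).
Proof.
  intros U. destruct (expand0 f0 U) as [l0 [Hl0 E0]].
  set (l1 := (l0 + 1) / 2).
  exists (/ l1). split. split. apply Rinv_0_lt_compat; unfold l1; lra.
  rewrite <- Rinv_1. apply Rinv_lt_contravar; unfold l1; lra.
  split.
  - generalize (Fc_and _ _ _ (Fc_close f0 ((l0 - 1) / 2) U ltac:(lra)) (Fc_U1 f0)).
    apply Fc_imp. intros f [A Uf] v C Hv i. apply jterm_bound; auto. unfold l1; lra.
    intros x Hx. destruct (A x Hx) as [_ A2]. specialize (E0 x Hx).
    assert (Rabs (Df f0 x) <= Rabs (Df f x) + Rabs (Df f x - Df f0 x)).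
    { replace (Df f0 x) with (Df f x - (Df f x - Df f0 x)) at 1 by ring.
      eapply Rle_trans. apply Rabs_triang. rewrite Rabs_Ropp. lra. }
    unfold l1; lra.
  - intros v C Hv i. apply jterm_bound; auto. unfold l1; lra.
    intros x Hx. specialize (E0 x Hx). unfold l1; lra.
Qed.

Lemma small_pow mu e : 0 < mu < 1 -> e > 0 -> exists N, (1 <= N)%nat /\ mu ^ N < e.
Proof.
  intros Hm He. destruct (pow_lt_1_zero mu ltac:(rewrite Rabs_right; lra) e He) as [N HN].
  exists (S N). split. lia. specialize (HN (S N) ltac:(lia)).
  rewrite Rabs_right in HN; auto. apply Rle_ge, pow_le; lra.
Qed.

Lemma INR_N1 N : (1 <= N)%nat -> INR (N - 1) + 1 = INR N.
Proof. intros H. rewrite minus_INR by auto. simpl. ring. Qed.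

Lemma partA f0 : U1 f0 -> ~ c_periodic f0 -> forall eta, eta > 0 ->
  exists delta, delta > 0 /\ forall f, U1 f -> norm1 (fun x => f x - f0 x) < delta ->
    forall v, Bk1 v -> Rabs (J f v - J f0 v) <= eta * norm1 v.
Proof.
  intros U NP eta He.
  destruct (setup f0 U) as [mu [Hmu [FS S0]]].
  destruct (small_pow mu (eta * (1 - mu) / 4)) as [N [HN HmN]]; auto.
  { apply Rdiv_lt_0_compat; [apply Rmult_lt_0_compat|]; lra. }
  assert (HNr : 1 <= INR N) by (replace 1 with (INR 1) by reflexivity; apply le_INR; auto).
  set (e := eta / (4 * INR N)).
  assert (He' : e > 0) by (unfold e; apply Rdiv_lt_0_compat; lra).
  assert (Hfin : Fc f0 (fun f => forall i, (i < N)%nat ->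
     ((iter f i 0 = iter f0 i 0 \/ Rabs (iter f i 0 - iter f0 i 0) < Rabs (iter f0 i 0)) /\
      Rabs (iter f i 0 - iter f0 i 0) < e) /\ Rabs (Dfn f i (f 0) - Dfn f0 i (f0 0)) < e)).
  { apply Fc_forall. intros i. apply Fc_and. apply Fc_and. apply Fc_sign; auto.
    apply tend_iter; auto. apply tend_D; auto. }
  destruct (Fc_and _ _ _ (Fc_and _ _ _ FS Hfin) (Fc_U1 f0)) as [d [Hd K]].
  exists d. split; auto. intros f Uf Hn v Hv.
  destruct (K f Uf Hn) as [[Kb Kf] _].
  destruct (v_bounds v Hv) as [V1 V2]. set (C := norm1 v) in *.
  assert (HC : 0 <= C) by (eapply Rle_trans; [apply Rabs_pos| apply (V1 0); unfold inI; lra]).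
  assert (Hm' : 0 <= mu < 1) by lra.
  assert (A1 := J_approx f v C mu N Hm' HN HC (fun i => proj1 (Kb v C V1 i))).
  assert (A2 := J_approx f0 v C mu N Hm' HN HC (fun i => proj1 (S0 v C V1 i))).
  specialize (A2 (fun q Hq => nonper f0 q NP ltac:(lia))).
  assert (A1' : forall q, (1 <= q < N)%nat -> iter f q 0 <> 0).
  { intros q Hq E. destruct (Kf q ltac:(lia)) as [[[S1|S1] _] _].
    - apply (nonper f0 q NP ltac:(lia)). rewrite <- S1. auto.
    - rewrite E in S1. rewrite Rminus_0_l, Rabs_Ropp in S1. lra. }
  specialize (A1 A1').
  assert (A3 : Rabs (sum_n (Jterm f v) (N - 1) - sum_n (Jterm f0 v) (N - 1)) <= (INR (N - 1) + 1) * (C * (2 * e))).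
  { apply sum_diff_bound. intros i Hi. destruct (Kf i ltac:(lia)) as [[Sg Ea] ED].
    unfold Jterm. eapply Rle_trans. apply frac_diff.
    apply (proj2 (Kb v C V1 i)). apply (proj2 (S0 v C V1 i)).
    assert (Ia : inI (iter f i 0)) by (apply iter_I; auto; unfold inI; lra).
    assert (Ib : inI (iter f0 i 0)) by (apply iter_I; auto; unfold inI; lra).
    assert (L1 := V2 _ _ Ia Ib Sg). assert (L2 := V1 _ Ib).
    assert (Rabs (v (iter f i 0) - v (iter f0 i 0)) <= C * e).
    { eapply Rle_trans; [apply L1|]. apply Rmult_le_compat_l; lra. }
    assert (Rabs (v (iter f0 i 0)) * Rabs (Dfn f i (f 0) - Dfn f0 i (f0 0)) <= C * e).
    { apply Rmult_le_compat; try apply Rabs_pos; lra. }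
    lra. }
  rewrite INR_N1 in A3 by auto.
  assert (T : C * mu ^ N / (1 - mu) <= C * (eta / 4)).
  { unfold Rdiv. rewrite Rmult_assoc. apply Rmult_le_compat_l; auto.
    apply Rle_trans with ((eta * (1 - mu) / 4) * / (1 - mu)).
    apply Rmult_le_compat_r. apply Rlt_le, Rinv_0_lt_compat; lra. lra.
    right. field. lra. }
  assert (T2 : INR N * (C * (2 * e)) = C * (eta / 2)) by (unfold e; field; lra).
  replace (J f v - J f0 v) with ((J f v - sum_n (Jterm f v) (N - 1)) +
     (sum_n (Jterm f v) (N - 1) - sum_n (Jterm f0 v) (N - 1)) - (J f0 v - sum_n (Jterm f0 v) (N - 1))) by ring.
  eapply Rle_trans. apply Rabs_triang. rewrite Rabs_Ropp.
  eapply Rle_trans. apply Rplus_le_compat_r. apply Rabs_triang.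
  lra.
Qed.

Lemma partB f0 : U1 f0 -> ~ c_periodic f0 -> forall v0, Bk0 v0 -> forall eps, eps > 0 ->
  exists delta, delta > 0 /\ forall f, U1 f -> norm1 (fun x => f x - f0 x) < delta ->
    Rabs (J f v0 - J f0 v0) < eps.
Proof.
  intros U NP v0 [CL [CR _]] eps He.
  destruct (setup f0 U) as [mu [Hmu [FS S0]]].
  destruct (cont_bounded (-1) 0 v0 ltac:(lra) CL) as [M1 HM1].
  destruct (cont_bounded 0 1 v0 ltac:(lra) CR) as [M2 HM2].
  set (C := Rmax M1 M2).
  assert (V1 : forall x, inI x -> Rabs (v0 x) <= C).
  { intros x Hx. unfold inI in Hx. destruct (Rle_dec x 0).
    eapply Rle_trans; [apply HM1; unfold inP; lra| apply Rmax_l].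
    eapply Rle_trans; [apply HM2; unfold inP; lra| apply Rmax_r]. }
  assert (HC : 0 <= C) by (eapply Rle_trans; [apply Rabs_pos| apply (V1 0); unfold inI; lra]).
  destruct (small_pow mu (eps * (1 - mu) / (4 * (C + 1)))) as [N [HN HmN]]; auto.
  { apply Rdiv_lt_0_compat; [apply Rmult_lt_0_compat|]; lra. }
  assert (HNr : 1 <= INR N) by (replace 1 with (INR 1) by reflexivity; apply le_INR; auto).
  set (e := eps / (4 * INR N * (C + 1))).
  assert (He' : e > 0) by (unfold e; apply Rdiv_lt_0_compat; [lra|]; apply Rmult_lt_0_compat; lra).
  assert (Hfin : Fc f0 (fun f => forall i, (i < N)%nat ->
     ((iter f i 0 = iter f0 i 0 \/ Rabs (iter f i 0 - iter f0 i 0) < Rabs (iter f0 i 0)) /\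
      Rabs (v0 (iter f i 0) - v0 (iter f0 i 0)) < e) /\ Rabs (Dfn f i (f 0) - Dfn f0 i (f0 0)) < e)).
  { apply Fc_forall. intros i. apply Fc_and. apply Fc_and. apply Fc_sign; auto.
    apply Fc_comp; auto. apply relI_full; auto. apply iter_I; auto. unfold inI; lra.
    apply tend_D; auto. }
  destruct (Fc_and _ _ _ (Fc_and _ _ _ FS Hfin) (Fc_U1 f0)) as [d [Hd K]].
  exists d. split; auto. intros f Uf Hn.
  destruct (K f Uf Hn) as [[Kb Kf] _].
  assert (Hm' : 0 <= mu < 1) by lra.
  assert (A1 := J_approx f v0 C mu N Hm' HN HC (fun i => proj1 (Kb v0 C V1 i))).
  assert (A2 := J_approx f0 v0 C mu N Hm' HN HC (fun i => proj1 (S0 v0 C V1 i))).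
  specialize (A2 (fun q Hq => nonper f0 q NP ltac:(lia))).
  assert (A1' : forall q, (1 <= q < N)%nat -> iter f q 0 <> 0).
  { intros q Hq E. destruct (Kf q ltac:(lia)) as [[[S1|S1] _] _].
    - apply (nonper f0 q NP ltac:(lia)). rewrite <- S1. auto.
    - rewrite E in S1. rewrite Rminus_0_l, Rabs_Ropp in S1. lra. }
  specialize (A1 A1').
  assert (A3 : Rabs (sum_n (Jterm f v0) (N - 1) - sum_n (Jterm f0 v0) (N - 1)) <= (INR (N - 1) + 1) * ((C + 1) * e)).
  { apply sum_diff_bound. intros i Hi. destruct (Kf i ltac:(lia)) as [[Sg Ea] ED].
    unfold Jterm. eapply Rle_trans. apply frac_diff.
    apply (proj2 (Kb v0 C V1 i)). apply (proj2 (S0 v0 C V1 i)).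
    assert (Ib : inI (iter f0 i 0)) by (apply iter_I; auto; unfold inI; lra).
    assert (L2 := V1 _ Ib).
    assert (Rabs (v0 (iter f0 i 0)) * Rabs (Dfn f i (f 0) - Dfn f0 i (f0 0)) <= C * e).
    { apply Rmult_le_compat; try apply Rabs_pos; lra. }
    lra. }
  rewrite INR_N1 in A3 by auto.
  assert (T : C * mu ^ N / (1 - mu) <= C * (eps / (4 * (C + 1)))).
  { unfold Rdiv. rewrite Rmult_assoc. apply Rmult_le_compat_l; auto.
    apply Rle_trans with ((eps * (1 - mu) / (4 * (C + 1))) * / (1 - mu)).
    apply Rmult_le_compat_r. apply Rlt_le, Rinv_0_lt_compat; lra. lra.
    right. field. lra. }
  assert (T3 : C * (eps / (4 * (C + 1))) < eps / 4).
  { replace (C * (eps / (4 * (C + 1)))) with ((eps / 4) * (C / (C + 1))) by (field; lra).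
    assert (C / (C + 1) < 1). { apply (Rmult_lt_reg_r (C + 1)). lra. unfold Rdiv. rewrite Rmult_assoc, Rinv_l by lra. lra. }
    assert (0 <= C / (C + 1)) by (apply Rdiv_le_0_compat; lra). nra. }
  assert (T2 : INR N * ((C + 1) * e) = eps / 4) by (unfold e; field; lra).
  replace (J f v0 - J f0 v0) with ((J f v0 - sum_n (Jterm f v0) (N - 1)) +
     (sum_n (Jterm f v0) (N - 1) - sum_n (Jterm f0 v0) (N - 1)) - (J f0 v0 - sum_n (Jterm f0 v0) (N - 1))) by ring.
  eapply Rle_lt_trans. apply Rabs_triang. rewrite Rabs_Ropp.
  eapply Rle_lt_trans. apply Rplus_le_compat_r. apply Rabs_triang.
  lra.
Qed.

Theorem proposition3p2 (f0 : R -> R) :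
  U1 f0 -> ~ c_periodic f0 ->
  (forall eta, eta > 0 ->
     exists delta, delta > 0 /\
       forall f, U1 f -> norm1 (fun x => f x - f0 x) < delta ->
         forall v, Bk1 v -> Rabs (J f v - J f0 v) <= eta * norm1 v)
  /\
  (forall v0, Bk0 v0 ->
     forall eps, eps > 0 ->
       exists delta, delta > 0 /\
         forall f, U1 f -> norm1 (fun x => f x - f0 x) < delta ->
           Rabs (J f v0 - J f0 v0) < eps).
Proof.
  intros U NP. split. apply partA; auto. apply partB; auto.
Qed.
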